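(* Let $X$ be a Banach space with a normalized $1$-unconditional basis $(e_i)_i$ not equivalent to the standard basis of $c_0$, let $q\le p$ in $[1,\infty]$, $q<\infty$, be such that $X$ satisfies lower $p$ and upper $q$ estimates on block sequences with constant one, and let $X_k=\mathrm{span}\{e_1,\dots,e_k\}$. Fix $d\in\mathbb{N}$ and $0<\varepsilon\le1$. Let $P\subseteq\mathbb{N}$ and $M=\{k_j\}_{j=1}^\infty\subseteq\mathbb{N}$ satisfy Assumption $A(d,\varepsilon/4)$. Then for all $\bar m\in[\{k_{2j}\}_{j=1}^\infty]^d$, all $k\in\{k_{2j}\}_{j=1}^\infty$ with $k>m_d$, and all step preserving maps $F\colon S^+_{\ell_\infty^k}\to S^+_{X_k}$ with $\omega_F(\tfrac1d)\le\tfrac\varepsilon8$, we have \[\Big\|F(z(\bar m))-\frac1{\psi(k)}\sum_{i=1}^ke_i\Big\|_X\le\varepsilon.\]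
   Context: Identify $X_k$ with $\mathbb{R}^k$ via $(e_i)$; $1_A=\sum_{i\in A}e_i$, $1_{(a,b]}=1_{\{i:a<i\le b\}}$. $S^+_{\ell_\infty^k}=\{x\in\mathbb{R}^k:\|x\|_\infty=1,x_i\ge0\}$, $S^+_{X_k}=\{\sum_{i\le k}a_ie_i:\|\cdot\|_X=1,a_i\ge0\}$. $\psi(k)=\|1_{[1,k]}\|_X$; $\psi_P(k)=\min\{\|1_{[1,k]\cap P}\|_X,\|1_{[1,k]\cap P^c}\|_X\}$. Lower $p$/upper $q$ estimates with constant one: $(\sum\|x_i\|^p)^{1/p}\le\|\sum x_i\|\le(\sum\|x_i\|^q)^{1/q}$ for every block sequence. Assumption $A(d,\varepsilon)$ for $P$ and $M=\{k_j\}$ ($k_1<k_2<\cdots$): (i) $\psi_P(k)\ge\frac12(\psi(k)-1)$ for all $k$; (ii) $(k_j,k_{j+1}]$ meets both $P$ and $P^c$ for all $j$; (iii) $\psi(k_{j+1})\ge(\frac{8d^{1/q-1/p}}{\varepsilon}+2)\psi(k_j)+1$. $[S]^d$ denotes increasing $d$-tuples from $S$; with $m_0=0$, $z(\bar m)=\sum_{s=1}^d(1-\frac{s-1}{d})1_{(m_{s-1},m_s]}$. $F=(F_i)$ is step preserving if $x_i=x_j$ implies $F_i(x)=F_j(x)$. $\omega_F(t)=\sup\{\|F(x)-F(y)\|_X:\|x-y\|_\infty\le t\}$. *)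

(* Defs.v *)
From HB Require Import structures.
From mathcomp Require Import all_boot all_order all_algebra.
From mathcomp Require Import all_classical all_reals.
From mathcomp Require Import exp.
Set Implicit Arguments. Unset Strict Implicit. Unset Printing Implicit Defensive.
Import Order.TTheory GRing.Theory Num.Theory.
Local Open Scope ring_scope.

(* Vectors are finitely supported real sequences indexed from 1
   (coordinate 0 is unused and must vanish); x i is the coefficient of e_i.
   The Banach space X is the completion of c00 for the norm N. *)
Section Defs.
Variable R : realType.
Implicit Types (x y : nat -> R) (N : (nat -> R) -> R).

Definition supported_in (n : nat) x := forall i, (i == 0%N) || (n < i)%N -> x i = 0.
Definition c00 x := exists n, supported_in n x.

Definition unitv (i : nat) : nat -> R := fun j => if j == i then 1 else 0.
Definition ind (A : nat -> bool) : nat -> R :=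
  fun i => if (0 < i)%N && A i then 1 else 0.
Definition ind_oc (a b : nat) : nat -> R := ind (fun i => (a < i <= b)%N).

Definition supn (k : nat) x : R := \big[Num.max/0]_(1 <= i < k.+1) `|x i|.

Definition is_norm_c00 N :=
  [/\ forall x, c00 x -> 0 <= N x,
      forall x, c00 x -> N x = 0 -> forall i, x i = 0,
      forall (a : R) x, c00 x -> N (fun i => a * x i) = `|a| * N x &
      forall x y, c00 x -> c00 y -> N (fun i => x i + y i) <= N x + N y].

Definition normalized_basis N := forall i, (0 < i)%N -> N (unitv i) = 1.

Definition one_unconditional N :=
  forall (eps : nat -> R) x, c00 x -> (forall i, eps i = 1 \/ eps i = -1) ->
    N (fun i => eps i * x i) = N x.

Definition equiv_c0 N := exists c C : R, 0 < c /\ 0 < C /\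
  forall n x, supported_in n x -> c * supn n x <= N x /\ N x <= C * supn n x.

Definition block_seq (xs : seq (nat -> R)) :=
  (forall x, x \in xs -> c00 x) /\
  forall i j, (i < j < size xs)%N -> forall a b,
    nth (fun _ => 0) xs i a != 0 -> nth (fun _ => 0) xs j b != 0 -> (a < b)%N.

Definition sumv (xs : seq (nat -> R)) : nat -> R := fun a => \sum_(x <- xs) x a.

Definition lp_norm (p : \bar R) (s : seq R) : R :=
  match p with
  | EFin r => (\sum_(a <- s) a `^ r) `^ r^-1
  | _ => \big[Num.max/0]_(a <- s) a
  end.

Definition inv_ext (p : \bar R) : R := match p with EFin r => r^-1 | _ => 0 end.

Definition lower_estimate N (p : \bar R) :=
  forall xs, block_seq xs -> lp_norm p (map N xs) <= N (sumv xs).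
Definition upper_estimate N (q : R) :=
  forall xs, block_seq xs -> N (sumv xs) <= lp_norm q%:E (map N xs).

Definition psi N (k : nat) : R := N (ind (fun i => (i <= k)%N)).
Definition psiP N (P : nat -> bool) (k : nat) : R :=
  Num.min (N (ind (fun i => (i <= k)%N && P i)))
          (N (ind (fun i => (i <= k)%N && ~~ P i))).

(* Assumption A(d, eps) for P and M = {k_j}_{j>=1} (k : nat -> nat, used at j >= 1) *)
Definition assumptionA N (p : \bar R) (q : R) (d : nat) (eps : R)
    (P : nat -> bool) (k : nat -> nat) :=
  [/\ forall n, psiP N P n >= (psi N n - 1) / 2,
      forall j, (1 <= j)%N ->
        (exists i, [&& (k j < i)%N, (i <= k j.+1)%N & P i]) /\
        (exists i, [&& (k j < i)%N, (i <= k j.+1)%N & ~~ P i]) &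
      forall j, (1 <= j)%N ->
        psi N (k j.+1) >=
          (8 * (d%:R `^ (q^-1 - inv_ext p)) / eps + 2) * psi N (k j) + 1].

(* z(m) = sum_{s=1}^d (1 - (s-1)/d) 1_(m_{s-1}, m_s], with m_0 = 0 *)
Definition zvec (d : nat) (m : nat -> nat) : nat -> R :=
  fun i => \sum_(1 <= s < d.+1)
     (1 - (s.-1)%:R / d%:R) * ind_oc (if s == 1%N then 0%N else m s.-1) (m s) i.

Definition Splus_linf (k : nat) x :=
  [/\ supported_in k x, forall i, 0 <= x i & supn k x = 1].
Definition Splus_X N (k : nat) x :=
  [/\ supported_in k x, forall i, 0 <= x i & N x = 1].

Definition maps_into N k (F : (nat -> R) -> (nat -> R)) :=
  forall x, Splus_linf k x -> Splus_X N k (F x).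

Definition step_preserving k (F : (nat -> R) -> (nat -> R)) :=
  forall x, Splus_linf k x -> forall i j, (1 <= i <= k)%N -> (1 <= j <= k)%N ->
    x i = x j -> F x i = F x j.

(* omega_F(t) <= c, i.e. sup{ ||F x - F y|| : ||x - y||_oo <= t } <= c *)
Definition omega_le N k (F : (nat -> R) -> (nat -> R)) (t c : R) :=
  forall x y, Splus_linf k x -> Splus_linf k y ->
    supn k (fun i => x i - y i) <= t -> N (fun i => F x i - F y i) <= c.

End Defs.

(* Main.v *)
Require Import Defs.
From HB Require Import structures.
From mathcomp Require Import all_boot all_order all_algebra.
From mathcomp Require Import all_classical all_reals.
From mathcomp Require Import exp.
From mathcomp Require Import ring lra zify.
Import Order.TTheory GRing.Theory Num.Theory.
Local Open Scope ring_scope.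
Set Implicit Arguments. Unset Strict Implicit. Unset Printing Implicit Defensive.
Lemma N_ext (R : realType) (N : (nat -> R) -> R) x y :
  (forall i, x i = y i) -> N x = N y.
Proof. by move=> /funext ->. Qed.

Lemma supp_c00 (R : realType) n (x : nat -> R) : supported_in n x -> c00 x.
Proof. by exists n. Qed.

Lemma N_ge0 (R : realType) (N : (nat -> R) -> R) x :
  is_norm_c00 N -> c00 x -> 0 <= N x.
Proof. by case=> H _ _ _ /H. Qed.

Lemma N_scale (R : realType) (N : (nat -> R) -> R) a x :
  is_norm_c00 N -> c00 x -> N (fun i => a * x i) = `|a| * N x.
Proof. by case=> _ _ H _ /H. Qed.

Lemma N_tri (R : realType) (N : (nat -> R) -> R) x y :
  is_norm_c00 N -> c00 x -> c00 y -> N (fun i => x i + y i) <= N x + N y.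
Proof. by case=> _ _ _ H; apply: H. Qed.

Lemma N_zero (R : realType) (N : (nat -> R) -> R) :
  is_norm_c00 N -> N (fun _ => 0) = 0.
Proof.
move=> HN.
have c0 : c00 (fun _ : nat => (0:R)) by exists 0%N.
transitivity (N (fun i => 0 * (0:R))); first by apply: N_ext => i; rewrite mul0r.
by rewrite (N_scale 0 HN c0) normr0 mul0r.
Qed.


Lemma N_opp (R : realType) (N : (nat -> R) -> R) x :
  is_norm_c00 N -> c00 x -> N (fun i => - x i) = N x.
Proof.
move=> HN cx; rewrite -[RHS]mul1r -(normrN1 R) -(N_scale _ HN cx).
by apply: N_ext => i; rewrite mulN1r.
Qed.

Lemma c00_add (R : realType) (x y : nat -> R) : c00 x -> c00 y -> c00 (fun i => x i + y i).
Proof.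
move=> [a Ha] [b Hb]; exists (maxn a b) => i Hi.
rewrite Ha ?Hb ?addr0 //; case/orP: Hi => [->//|H]; apply/orP; right.
  exact: leq_ltn_trans (leq_maxr a b) H.
exact: leq_ltn_trans (leq_maxl a b) H.
Qed.

Lemma c00_scale (R : realType) a (x : nat -> R) : c00 x -> c00 (fun i => a * x i).
Proof. by move=> [n Hn]; exists n => i /Hn ->; rewrite mulr0. Qed.

Lemma c00_proj (R : realType) (A : nat -> bool) (x : nat -> R) : c00 x -> c00 (fun i => if A i then x i else 0).
Proof. by move=> [n Hn]; exists n => i /Hn ->; case: (A i). Qed.

Lemma N_proj (R : realType) (N : (nat -> R) -> R) (A : nat -> bool) x :
  is_norm_c00 N -> one_unconditional N -> c00 x ->
  N (fun i => if A i then x i else 0) <= N x.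
Proof.
move=> HN HU cx.
pose e i : R := if A i then 1 else -1.
have He : forall i, e i = 1 \/ e i = -1 by move=> i; rewrite /e; case: (A i); [left|right].
have cy : c00 (fun i => e i * x i) by case: cx => n Hn; exists n => i /Hn ->; rewrite mulr0.
have := N_tri HN cx cy; rewrite (HU e x cx He) => H.
have -> : N (fun i => if A i then x i else 0) = `|2^-1 : R| * N (fun i => x i + e i * x i).
  rewrite -N_scale //; last exact: c00_add.
  by apply: N_ext => i; rewrite /e; case: (A i); lra.
rewrite ger0_norm ?invr_ge0 ?ler0n //.
have Hx := N_ge0 HN cx.
lra.
Qed.
Lemma young2 (R : realType) (a b t : R) : 0 <= a -> 0 <= b -> 0 < t <= 1 ->
  a `^ t * b `^ (1 - t) <= t * a + (1 - t) * b.
Proof.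
move=> a0 b0 /andP[t0 t1].
have [->|tlt1] := eqVneq t 1.
  by rewrite subrr powRr0 powRr1 // mulr1 mul1r mul0r addr0.
have t1' : t < 1 by rewrite lt_neqAle tlt1 t1.
have u0 : 0 < 1 - t by rewrite subr_gt0.
have := @conjugate_powR R (a `^ t) (b `^ (1 - t)) t^-1 (1 - t)^-1 (powR_ge0 _ _) (powR_ge0 _ _)
  (eqbRL (invr_gt0 _) t0) (eqbRL (invr_gt0 _) u0).
have E : t^-1^-1 + (1 - t)^-1^-1 = 1 :> R by rewrite !invrK addrC subrK.
move=> /(_ E) H.
have E1 : (a `^ t) `^ t^-1 / t^-1 = t * a by rewrite -powRrM mulfV ?gt_eqF // powRr1 // invrK mulrC.
have E2 : (b `^ (1 - t)) `^ (1 - t)^-1 / (1 - t)^-1 = (1 - t) * b by rewrite -powRrM mulfV ?gt_eqF // powRr1 // invrK mulrC.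
rewrite E1 E2 in H.
exact: H.
Qed.

Lemma sum_const_seq (R : realType) (I : seq nat) (c : R) :
  \sum_(s <- I) c = (size I)%:R * c.
Proof.
elim: I => [|a I IH]; first by rewrite big_nil mul0r.
by rewrite big_cons IH /= -addn1 natrD mulrDl mul1r addrC.
Qed.

Lemma pm_core (R : realType) (q r : R) (I : seq nat) (v : nat -> R) :
  1 <= q -> q <= r -> (0 < size I)%N -> (forall s, 0 <= v s) ->
  (\sum_(s <- I) v s `^ q) `^ q^-1 <=
    (size I)%:R `^ (q^-1 - r^-1) * (\sum_(s <- I) v s `^ r) `^ r^-1.
Proof.
move=> q1 qr n0 v0.
have q0 : 0 < q by apply: lt_le_trans q1; exact: ltr01.
have r0 : 0 < r by apply: lt_le_trans qr.
set n : R := (size I)%:R.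
have n0' : 0 < n by rewrite ltr0n.
set S := \sum_(s <- I) v s `^ r.
set T := \sum_(s <- I) v s `^ q.
have S0 : 0 <= S by apply: sumr_ge0 => s _; exact: powR_ge0.
have T0 : 0 <= T by apply: sumr_ge0 => s _; exact: powR_ge0.
have [Seq0|Sgt0] := eqVneq S 0.
  have vz : forall s, s \in I -> v s = 0.
    move=> s sI; apply: (@powR_eq0_eq0 _ _ r).
    move: Seq0; rewrite /S => /eqP; rewrite psumr_eq0 => [/allP/(_ s sI)/implyP/(_ isT)/eqP //|].
    by move=> i _; exact: powR_ge0.
  have -> : T = 0.
    rewrite /T big_seq (eq_bigr (fun _ => 0)) ?big1 // => s sI.
    by rewrite vz // powR0 // gt_eqF.
  rewrite powR0 ?invr_eq0 ?gt_eqF //.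
  by apply: mulr_ge0; exact: powR_ge0.
have Spos : 0 < S by rewrite lt_neqAle eq_sym Sgt0 S0.
set t := q / r.
have t0 : 0 < t by rewrite divr_gt0.
have t1 : t <= 1 by rewrite ler_pdivrMr // mul1r.
have key : T * (S / n) `^ (1 - t) <= S.
  rewrite /T mulr_suml.
  apply: (@le_trans _ _ (\sum_(s <- I) (t * v s `^ r + (1 - t) * (S / n)))).
    apply: ler_sum => s _.
    have -> : v s `^ q = (v s `^ r) `^ t by rewrite -powRrM /t mulrCA mulfV ?gt_eqF // mulr1.
    apply: young2; [exact: powR_ge0| |by rewrite t0 t1].
    by rewrite divr_ge0 // ltW.
  rewrite big_split /= -mulr_sumr sum_const_seq -/n -/S.
  have -> : n * ((1 - t) * (S / n)) = (1 - t) * S.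
    by rewrite mulrCA; congr (_ * _); rewrite mulrCA mulfV ?gt_eqF // mulr1.
  lra.
have hT : T <= n `^ (1 - t) * S `^ t.
  have pos : 0 < (S / n) `^ (1 - t) by apply: powR_gt0; rewrite divr_gt0.
  suff H : T * (S / n) `^ (1 - t) <= n `^ (1 - t) * S `^ t * (S / n) `^ (1 - t).
    by rewrite ler_pM2r in H.
  apply: (le_trans key).
  have e1 : (S / n) `^ (1 - t) = S `^ (1 - t) / n `^ (1 - t).
    by rewrite powRM ?invr_ge0 ?ltW // -powR_inv1 ?ltW // -powRrM mulN1r powRN.
  have e2 : S `^ t * S `^ (1 - t) = S.
    rewrite -powRD; first by rewrite addrC subrK powRr1 // ltW.
    by apply/implyP => _; rewrite gt_eqF.
  have nz : n `^ (1 - t) != 0 by rewrite gt_eqF // powR_gt0.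
  rewrite e1.
  have -> : n `^ (1 - t) * S `^ t * (S `^ (1 - t) / n `^ (1 - t)) = S `^ t * S `^ (1 - t).
    by field.
  by rewrite e2.
have -> : n `^ (q^-1 - r^-1) * S `^ r^-1 = (n `^ (1 - t) * S `^ t) `^ q^-1.
  rewrite powRM ?powR_ge0 // -!powRrM; congr (_ `^ _ * _ `^ _); rewrite /t.
    by rewrite mulrBl mul1r mulrAC mulfV ?gt_eqF // mul1r.
  by rewrite mulrAC mulfV ?gt_eqF // mul1r.
apply: ge0_ler_powR => //; first by rewrite invr_ge0 ltW.
by rewrite nnegrE mulr_ge0 // powR_ge0.
Qed.
Lemma bigmax_ge (R : realType) (I : seq nat) (g : nat -> R) s :
  s \in I -> g s <= \big[Num.max/0]_(i <- I) g i.
Proof.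
elim: I => [//|a I IH]; rewrite inE big_cons => /orP[/eqP->|/IH H].
  by rewrite le_max lexx.
by rewrite le_max H orbT.
Qed.

Lemma bigmax_ge0 (R : realType) (I : seq nat) (g : nat -> R) :
  0 <= \big[Num.max/0]_(i <- I) g i.
Proof.
elim: I => [|a I IH]; first by rewrite big_nil.
by rewrite big_cons le_max IH orbT.
Qed.

Lemma PM (R : realType) (p : \bar R) (q th : R) (I : seq nat) (f g : nat -> R) :
  1 <= q -> (q%:E <= p)%E -> 0 <= th -> (0 < size I)%N ->
  (forall s, 0 <= f s) -> (forall s, 0 <= g s) -> (forall s, s \in I -> f s <= th * g s) ->
  lp_norm q%:E (map f I) <= th * (size I)%:R `^ (q^-1 - inv_ext p) * lp_norm p (map g I).
Proof.
move=> q1 qp th0 n0 f0 g0 fg.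
have q0 : 0 < q by apply: lt_le_trans q1; exact: ltr01.
have v0 : forall s, 0 <= th * g s by move=> s; apply: mulr_ge0.
have stepA : lp_norm q%:E (map f I) <= (\sum_(s <- I) (th * g s) `^ q) `^ q^-1.
  rewrite /lp_norm big_map.
  apply: ge0_ler_powR; first by rewrite invr_ge0 ltW.
    by rewrite nnegrE; apply: sumr_ge0 => s _; exact: powR_ge0.
    by rewrite nnegrE; apply: sumr_ge0 => s _; exact: powR_ge0.
  rewrite big_seq [X in _ <= X]big_seq.
  by apply: ler_sum => s sI; apply: ge0_ler_powR => //; [exact: ltW|rewrite nnegrE|rewrite nnegrE|exact: fg].
apply: (le_trans stepA).
move: qp; case: p => [r||] //=.
- rewrite lee_fin => qr.
  have r0 : 0 < r by apply: lt_le_trans qr.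
  apply: (le_trans (pm_core q1 qr n0 v0)).
  rewrite /lp_norm big_map.
  have -> : \sum_(s <- I) (th * g s) `^ r = th `^ r * \sum_(s <- I) g s `^ r.
    by rewrite mulr_sumr; apply: eq_bigr => s _; rewrite powRM.
  have Ss : 0 <= \sum_(s <- I) g s `^ r by apply: sumr_ge0 => s _; exact: powR_ge0.
  rewrite (powRM _ (powR_ge0 _ _) Ss) -powRrM mulfV ?gt_eqF // powRr1 //.
  by rewrite mulrCA mulrA.
- move=> _; rewrite subr0.
  set M := \big[Num.max/0]_(a <- map g I) a.
  have gM : forall s, s \in I -> g s <= M.
    by move=> s sI; rewrite /M big_map; exact: bigmax_ge.
  have M0 : 0 <= M by rewrite /M big_map; exact: bigmax_ge0.
  apply: (@le_trans _ _ (((size I)%:R * (th * M) `^ q) `^ q^-1)).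
    apply: ge0_ler_powR; first by rewrite invr_ge0 ltW.
        by rewrite nnegrE; apply: sumr_ge0 => s _; exact: powR_ge0.
      by rewrite nnegrE mulr_ge0 ?ler0n ?powR_ge0.
    rewrite -sum_const_seq big_seq [X in _ <= X]big_seq.
    apply: ler_sum => s sI; apply: ge0_ler_powR; try exact: ltW; rewrite ?nnegrE ?mulr_ge0 //.
    by apply: ler_wpM2l => //; exact: gM.
  rewrite powRM ?ler0n ?powR_ge0 // -powRrM mulfV ?gt_eqF // powRr1 ?mulr_ge0 //.
  by rewrite mulrCA mulrA.
Qed.
Lemma key_est (R : realType) (N : (nat -> R) -> R) (p : \bar R) (q th : R)
  (I : seq nat) (U W : nat -> (nat -> R)) :
  is_norm_c00 N -> lower_estimate N p -> upper_estimate N q ->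
  1 <= q -> (q%:E <= p)%E -> 0 <= th -> (0 < size I)%N ->
  (forall s, c00 (U s)) -> (forall s, c00 (W s)) ->
  block_seq (map U I) -> block_seq (map W I) ->
  (forall s, s \in I -> N (U s) <= th * N (W s)) ->
  N (sumv (map U I)) <= th * (size I)%:R `^ (q^-1 - inv_ext p) * N (sumv (map W I)).
Proof.
move=> HN Hlo Hup q1 qp th0 n0 cU cW bU bW UW.
apply: (le_trans (Hup _ bU)).
rewrite -map_comp.
apply: (le_trans (PM (f := fun s => N (U s)) (g := fun s => N (W s)) q1 qp th0 n0 _ _ UW)).
- by move=> s; exact: N_ge0.
- by move=> s; exact: N_ge0.
apply: ler_wpM2l; first by apply: mulr_ge0 => //; exact: powR_ge0.
by have := Hlo _ bW; rewrite -map_comp.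
Qed.
Lemma mono_nat (L : nat -> nat) : (forall s, (L s <= L s.+1)%N) ->
  forall a b, (a <= b)%N -> (L a <= L b)%N.
Proof.
move=> Lm a b /subnK <-; elim: (b - a)%N => [|n IH] //.
by rewrite addSn (leq_trans IH (Lm _)).
Qed.

Lemma blocks_disj (L : nat -> nat) : (forall s, (L s <= L s.+1)%N) ->
  forall s t x, (L s < x <= L s.+1)%N -> (L t < x <= L t.+1)%N -> s = t.
Proof.
move=> Lm s t x /andP[h1 h2] /andP[h3 h4].
case: (ltngtP s t) => // st.
- have := mono_nat Lm st; move=> H; have := leq_ltn_trans H h3.
  by rewrite ltnNge h2.
- have := mono_nat Lm st; move=> H; have := leq_ltn_trans H h1.
  by rewrite ltnNge h4.
Qed.

Lemma sum_blocks_in (R : realType) (L : nat -> nat) (G : nat -> nat -> R) a n t x :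
  (forall s, (L s <= L s.+1)%N) -> (a <= t < a + n)%N -> (L t < x <= L t.+1)%N ->
  (forall s, ~~ (L s < x <= L s.+1)%N -> G s x = 0) ->
  \sum_(s <- iota a n) G s x = G t x.
Proof.
move=> Lm tin xin G0.
rewrite (bigD1_seq t) ?mem_iota ?iota_uniq //= big1 ?addr0 // => s st.
apply: G0; apply/negP => sin; move/eqP: st; apply.
exact: (blocks_disj Lm sin xin).
Qed.

Lemma sum_blocks_out (R : realType) (G : nat -> nat -> R) a n x :
  (forall s, (a <= s < a + n)%N -> G s x = 0) ->
  \sum_(s <- iota a n) G s x = 0.
Proof.
by move=> H; rewrite big_seq big1 // => s; rewrite mem_iota => /H.
Qed.

Lemma block_exists (L : nat -> nat) : (forall s, (L s <= L s.+1)%N) ->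
  forall n x, (L 0 < x <= L n)%N -> exists t, (t < n)%N /\ (L t < x <= L t.+1)%N.
Proof.
move=> Lm; elim=> [|n IH] x /andP[h1 h2].
  by move: (leq_ltn_trans h2 h1); rewrite ltnn.
case: (leqP x (L n)) => hx.
  by have [t [tn tx]] := IH x (introT andP (conj h1 hx)); exists t; split => //; exact: ltnW.
by exists n; rewrite hx h2.
Qed.

Lemma block_seq_ind (R : realType) (L : nat -> nat) (c : nat -> R) (Q : nat -> bool) a n :
  (forall s, (L s <= L s.+1)%N) ->
  block_seq (map (fun s i => c s * ind R (fun i => (L s < i <= L s.+1)%N && Q i) i) (iota a n)).
Proof.
move=> Lm; split.
  move=> v /mapP[s _ ->]; exists (L s.+1) => i /orP[/eqP->|H].
    by rewrite /ind /= mulr0.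
  by rewrite /ind (leqNgt i) H !andbF /= mulr0.
move=> i j /andP[ij jn] x y.
rewrite size_map in jn.
have iin : (i < size (iota a n))%N by apply: ltn_trans ij jn.
rewrite !(nth_map 0%N) // nth_iota; last by rewrite size_iota in iin.
rewrite nth_iota; last by rewrite size_iota in jn.
rewrite /ind.
case: ifP => [/andP[_ /andP[/andP[_ hx] _]] _|]; last by rewrite mulr0 eqxx.
case: ifP => [/andP[_ /andP[/andP[hy _] _]] _|]; last by rewrite mulr0 eqxx.
apply: (leq_ltn_trans hx); apply: (leq_ltn_trans _ hy).
by apply: mono_nat => //; rewrite -addnS leq_add2l.
Qed.

Lemma supn_le (R : realType) k (x : nat -> R) c : 0 <= c ->
  (forall i, (1 <= i <= k)%N -> `|x i| <= c) -> supn k x <= c.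
Proof.
move=> c0 H; rewrite /supn big_seq_cond.
apply: (big_ind (fun v => v <= c)) => //.
  by move=> u v hu hv; rewrite ge_max hu hv.
by move=> i /andP[]; rewrite mem_iota subnKC // => /andP[a b] _; apply: H; rewrite a -ltnS b.
Qed.

Lemma supn_ge (R : realType) k (x : nat -> R) i : (1 <= i <= k)%N -> `|x i| <= supn k x.
Proof.
move=> /andP[a b]; rewrite /supn.
have : i \in index_iota 1 k.+1 by rewrite mem_index_iota a ltnS.
elim: (index_iota 1 k.+1) => [//|j s IH]; rewrite inE big_cons => /orP[/eqP<-|/IH h].
  by rewrite le_max lexx.
by rewrite le_max h orbT.
Qed.
Theorem theorem6p1 (R : realType) (N : (nat -> R) -> R) (p : \bar R) (q : R)
  (d : nat) (eps : R) (P : nat -> bool) (kseq : nat -> nat)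
  (m : nat -> nat) (k : nat) (F : (nat -> R) -> (nat -> R)) :
  is_norm_c00 N -> normalized_basis N -> one_unconditional N -> ~ equiv_c0 N ->
  (1 <= q) -> (q%:E <= p)%E ->
  lower_estimate N p -> upper_estimate N q ->
  (0 < d)%N -> 0 < eps -> eps <= 1 ->
  (0 < kseq 1)%N -> (forall j, (1 <= j)%N -> (kseq j < kseq j.+1)%N) ->
  assumptionA N p q d (eps / 4) P kseq ->
  (forall s, (1 <= s <= d)%N -> exists j, (1 <= j)%N /\ m s = kseq (2 * j)%N) ->
  (forall s, (1 <= s < d)%N -> (m s < m s.+1)%N) ->
  (exists j, (1 <= j)%N /\ k = kseq (2 * j)%N) -> (m d < k)%N ->
  maps_into N k F -> step_preserving k F -> omega_le N k F (d%:R^-1) (eps / 8) ->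
  N (fun i => F (zvec R d m) i - (psi N k)^-1 * ind R (fun i => (i <= k)%N) i) <= eps.
Proof.
move=> HN Hbas HU Hnc0 q1 qp Hlo Hup d0 eps0 eps1 k10 kinc [HA1 HA2 HA3] Hm Hminc Hk Hmk Fmap Fstep Fom.
set D := d%:R `^ (q^-1 - inv_ext p).
have D0 : 0 < D by apply: powR_gt0; rewrite ltr0n.
set G := 8 * D / (eps / 4) + 2.
have HA3' : forall j, (1 <= j)%N -> G * psi N (kseq j) + 1 <= psi N (kseq j.+1) by exact: HA3.
have G1 : 1 <= G.
  rewrite /G -lerBlDr; apply: le_trans (_ : 0 <= _); first lra.
  by apply: divr_ge0; [apply: mulr_ge0 => //; exact: ltW| lra].
set th := eps / (16 * D).
have th0 : 0 <= th by apply: divr_ge0; [exact: ltW| apply: mulr_ge0 => //; exact: ltW].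
have thD : th * D = eps / 16 by rewrite /th; field; rewrite gt_eqF.
have thG : th * (G / 2 - 1) = 1 by rewrite /th /G; field; rewrite !gt_eqF.
have ind_c00 : forall (A : nat -> bool) n, (forall i, A i -> (i <= n)%N) -> c00 (ind R A).
  move=> A n HA; exists n => i /orP[/eqP->|H]; first by rewrite /ind.
  rewrite /ind; case: ifP => // /andP[_ /HA]; by rewrite leqNgt H.
have psi0 : forall n, 0 <= psi N n.
  by move=> n; apply: N_ge0 => //; apply: (ind_c00 _ n).
have kmono : forall a b, (1 <= a)%N -> (a <= b)%N -> (kseq a <= kseq b)%N.
  move=> a b a1 /subnK <-; elim: (b - a)%N => [//|n IH].
  by rewrite addSn (leq_trans IH) // ltnW // kinc // (leq_trans a1) // leq_addl.
have kreflect : forall a b, (1 <= a)%N -> (1 <= b)%N -> (kseq a < kseq b)%N -> (a < b)%N.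
  move=> a b a1 b1 H; rewrite ltnNge; apply/negP => ba.
  by have := kmono _ _ b1 ba; rewrite leqNgt H.
have chain : forall a b, (1 <= a)%N -> (a < b)%N -> G * psi N (kseq a) + 1 <= psi N (kseq b).
  move=> a b a1; elim: b => [//|b IH]; rewrite ltnS leq_eqVlt => /orP[/eqP<-|ab].
    exact: HA3'.
  have b1 : (1 <= b)%N by apply: leq_trans ab.
  apply: le_trans (IH ab) _; apply: le_trans (HA3' b b1).
  have h1 := psi0 (kseq b).
  have : psi N (kseq b) <= G * psi N (kseq b) by rewrite -[X in X <= _]mul1r ler_wpM2r.
  lra.
pose Mf s := if s == 0%N then 0%N else if (s <= d)%N then m s else k.
have Mf0 : Mf 0%N = 0%N by [].
have MfS : forall s, (1 <= s <= d)%N -> Mf s = m s.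
  by move=> s /andP[s1 sd]; rewrite /Mf sd; case: eqP => // s0; rewrite s0 in s1.
have Mfd1 : Mf d.+1 = k by rewrite /Mf /= ltnn.
have Mfk : forall s, (1 <= s)%N -> exists j, (1 <= j)%N /\ Mf s = kseq (2 * j)%N.
  move=> s s1; rewrite /Mf; case: eqP => [s0|_]; first by rewrite s0 in s1.
  by case: ifP => sd; [apply: Hm; rewrite s1 sd|].
have Mfpos : forall s, (1 <= s)%N -> (0 < Mf s)%N.
  move=> s /Mfk [j [j1 ->]]; apply: leq_trans k10 _; apply: kmono => //.
  by rewrite (leq_trans j1) // leq_pmull.
have Mfinc : forall s, (s <= d)%N -> (Mf s < Mf s.+1)%N.
  move=> s sd; case: (posnP s) => [->|s0]; first exact: Mfpos.
  rewrite MfS ?s0 ?sd //; case: (ltngtP s d) => [sd'|sd'|sd']; last 2 first.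
  - by rewrite ltnNge sd in sd'.
  - by rewrite sd' Mfd1.
  by rewrite MfS ?sd' // Hminc // s0 sd'.
have Mfbig : forall s, (d < s)%N -> Mf s = k.
  move=> s sd; rewrite /Mf ifN; last by rewrite gtn_eqF // (leq_ltn_trans (leq0n d) sd).
  by rewrite ifN // -ltnNge.
have Mfm : forall s, (Mf s <= Mf s.+1)%N.
  move=> s; case: (leqP s d) => sd; first exact: ltnW (Mfinc s sd).
  by rewrite !Mfbig // ltnW.
have Mfle : forall s, (Mf s <= k)%N.
  move=> s; case: (leqP s d) => sd; last by rewrite Mfbig.
  rewrite -Mfd1; apply: mono_nat => //; exact: leqW.
have grow : forall s, (1 <= s <= d)%N -> G * psi N (Mf s) + 1 <= psi N (Mf s.+1).
  move=> s /andP[s1 sd].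
  have [j1 [j11 e1]] := Mfk s s1; have [j2 [j21 e2]] := Mfk s.+1 isT.
  have := Mfinc s sd; rewrite e1 e2 => H.
  apply: chain; first by rewrite (leq_trans j11) // leq_pmull.
  by apply: kreflect => //; rewrite (leq_trans _ (leq_pmull _ _)).
have psi1 : forall s, (1 <= s)%N -> 1 <= psi N (Mf s).
  move=> s /Mfk [j [j1 ->]].
  have := chain 1%N (2 * j)%N isT ltac:(clear -j1; lia).
  have := psi0 (kseq 1); have := mulr_ge0 (le_trans ler01 G1) (psi0 (kseq 1)); lra.
have Lm : forall s, (Mf s.-1 <= Mf s.+1.-1)%N by case=> [//|s]; exact: Mfm.
have dpos : 0 < d%:R :> R by rewrite ltr0n.
pose zval (t : nat) : R := 1 - (t.-1)%:R / d%:R.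
have zval01 : forall t, (1 <= t <= d.+1)%N -> 0 <= zval t <= 1.
  move=> [//|t] /andP[_ td]; rewrite /zval /=.
  have : (t%:R : R) <= d%:R by rewrite ler_nat.
  have : 0 <= (t%:R : R) by [].
  move=> h1 h2; apply/andP; split.
    by rewrite subr_ge0 ler_pdivrMr // mul1r.
  by rewrite lerBlDr lerDl divr_ge0.
have zvalS : forall t, (1 <= t)%N -> zval t.+1 + d%:R^-1 = zval t.
  move=> [//|t] _; rewrite /zval /= -[t.+1]addn1 natrD; field; exact: lt0r_neq0.
have zvald : zval d.+1 = 0 by rewrite /zval /= divff ?subrr // lt0r_neq0.
set z := zvec R d m.
have zsum : forall x, z x = \sum_(s <- iota 1 d) zval s * ind R (fun i => (Mf s.-1 < i <= Mf s)%N) x.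
  move=> x; rewrite /z /zvec /index_iota subn1 succnK big_seq [RHS]big_seq.
  apply: eq_bigr => s; rewrite mem_iota => /andP[s1 sd].
  have ea : (if s == 1%N then 0%N else m s.-1) = Mf s.-1.
    case: eqP => [->//|s1']; rewrite MfS //; apply/andP; split; first by clear -s1 s1'; lia.
    by apply: leq_trans (leq_pred s) _; rewrite -ltnS -(addn1 d) addnC.
  have eb : m s = Mf s by rewrite MfS // s1 -ltnS -(addn1 d) addnC.
  by rewrite /ind_oc ea eb.
have Lm' : forall s, ((fun s => Mf s.-1) s <= (fun s => Mf s.-1) s.+1)%N by exact: Lm.
have zin : forall t x, (1 <= t <= d.+1)%N -> (Mf t.-1 < x <= Mf t)%N -> z x = zval t.
  move=> t x /andP[t1 td] xin; rewrite zsum.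
  case: (ltnP t d.+1) => [tlt|tge].
    rewrite (@sum_blocks_in R (fun s => Mf s.-1) (fun s x => zval s * ind R (fun i => (Mf s.-1 < i <= Mf s)%N) x) 1 d t x Lm').
    - by rewrite /ind xin andbT (leq_ltn_trans (leq0n _) (proj1 (andP xin))) mulr1.
    - by rewrite t1 add1n.
    - exact: xin.
    - by move=> s hs; rewrite /ind (negbTE hs) andbF mulr0.
  have etd : t = d.+1 by apply/eqP; rewrite eqn_leq td tge.
  rewrite etd zvald (@sum_blocks_out R (fun s x => zval s * ind R (fun i => (Mf s.-1 < i <= Mf s)%N) x) 1 d x) // => s /andP[s1 sd].
  rewrite /ind; case: ifP; rewrite ?mulr0 // => /andP[_ /andP[_ h]].
  move: xin; rewrite etd => /andP[h' _].
  have hs : (Mf s <= Mf d)%N by apply: mono_nat => //; clear -sd; lia.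
  by have := leq_ltn_trans (leq_trans h hs) h'; rewrite ltnn.
have blk : forall x, (1 <= x <= k)%N -> exists t, (1 <= t <= d.+1)%N /\ (Mf t.-1 < x <= Mf t)%N.
  move=> x /andP[x1 xk].
  have [t [tn tx]] := @block_exists Mf Mfm d.+1 x ltac:(by rewrite Mf0 Mfd1 x1 xk).
  by exists t.+1; split; [clear -tn; lia | exact: tx].
have ind01 : forall (A : nat -> bool) i, 0 <= ind R A i <= 1.
  by move=> A i; rewrite /ind; case: ifP; rewrite ?lexx ?ler01.
have zout : forall x, (x == 0%N) || (k < x)%N -> z x = 0.
  move=> x hx; rewrite zsum (@sum_blocks_out R (fun s x => zval s * ind R (fun i => (Mf s.-1 < i <= Mf s)%N) x) 1 d x) // => s _.
  rewrite /ind; case: ifP; rewrite ?mulr0 // => /andP[x0 /andP[_ h]].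
  move: hx => /orP[/eqP x00|kx]; first by rewrite x00 in x0.
  by have := leq_trans h (Mfle s); rewrite leqNgt kx.
have zval1 : zval 1%N = 1 by rewrite /zval mul0r subr0.
have in1 : (Mf 0%N < 1 <= Mf 1%N)%N by rewrite Mf0 /=; exact: Mfpos.
have zS : Splus_linf k z.
  split.
  - by move=> i /zout.
  - move=> i; rewrite zsum big_seq; apply: sumr_ge0 => s; rewrite mem_iota => /andP[s1 sd].
    apply: mulr_ge0; last by case/andP: (ind01 (fun i => (Mf s.-1 < i <= Mf s)%N) i).
    by case/andP: (zval01 s ltac:(clear -s1 sd; lia)).
  - apply/eqP; rewrite eq_le; apply/andP; split.
      apply: supn_le => // i /blk [t [tr ti]]; rewrite (zin t i tr ti).
      by case/andP: (zval01 t tr) => h1 h2; rewrite ger0_norm.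
    have := @supn_ge R k z 1%N ltac:(clear -Hmk; lia); rewrite (zin 1%N 1%N isT in1) zval1 normr1 //.
have [Fzsupp Fz0 FzN] := Fmap z zS.
pose al t := F z (Mf t).
have Mfin : forall t, (1 <= t <= d.+1)%N -> (Mf t.-1 < Mf t <= Mf t)%N.
  move=> [//|t] /andP[_ td]; rewrite leqnn andbT; exact: Mfinc.
have Mfrange : forall t, (1 <= t)%N -> (1 <= Mf t <= k)%N.
  by move=> t t1; rewrite Mfpos // Mfle.
have inrange : forall t x, (Mf t.-1 < x <= Mf t)%N -> (1 <= x <= k)%N.
  move=> t x /andP[h1 h2]; apply/andP; split; first exact: leq_ltn_trans (leq0n _) h1.
  exact: leq_trans h2 (Mfle t).
have Fzin : forall t x, (1 <= t <= d.+1)%N -> (Mf t.-1 < x <= Mf t)%N -> F z x = al t.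
  move=> t x tr xin; apply: (Fstep z zS x (Mf t)).
  - exact: inrange xin.
  - exact: Mfrange (proj1 (andP tr)).
  - by rewrite (zin t x tr xin) (zin t (Mf t) tr (Mfin t tr)).
pose h i := F z i - al d.+1 * ind R (fun i => (i <= k)%N) i.
have c00F : forall (v : nat -> R), supported_in k v -> c00 v by move=> v; exact: supp_c00.
have growQ : forall Q' : nat -> bool,
    (forall n, (psi N n - 1) / 2 <= N (ind R (fun i => (i <= n)%N && Q' i))) ->
    forall s, (1 <= s <= d)%N ->
    psi N (Mf s) <= th * N (ind R (fun i => (Mf s < i <= Mf s.+1)%N && Q' i)).
  move=> Q' HQ s sr.
  have ab := Mfm s.
  have e : forall i, ind R (fun i => (i <= Mf s.+1)%N && Q' i) i =
      ind R (fun i => (Mf s < i <= Mf s.+1)%N && Q' i) i + ind R (fun i => (i <= Mf s)%N && Q' i) i.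
    move=> i; rewrite /ind; case: (Q' i); rewrite ?andbF ?andbT ?addr0 //.
    case: (0 < i)%N; rewrite /= ?addr0 //.
    case: (leqP i (Mf s)) => h1; case: (leqP i (Mf s.+1)) => h2 /=; rewrite ?addr0 ?add0r //.
    by have := leq_ltn_trans (leq_trans h1 ab) h2; rewrite ltnn.
  have cB : c00 (ind R (fun i => (Mf s < i <= Mf s.+1)%N && Q' i)).
    by apply: (ind_c00 _ (Mf s.+1)) => i /andP[/andP[_ ->]].
  have cA : c00 (ind R (fun i => (i <= Mf s)%N && Q' i)).
    by apply: (ind_c00 _ (Mf s)) => i /andP[->].
  have tri := N_tri HN cB cA.
  rewrite -(N_ext N e) in tri.
  have pr : N (ind R (fun i => (i <= Mf s)%N && Q' i)) <= psi N (Mf s).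
    have -> : N (ind R (fun i => (i <= Mf s)%N && Q' i)) =
        N (fun i => if Q' i then ind R (fun i => (i <= Mf s)%N) i else 0).
      by apply: N_ext => i; rewrite /ind; case: (Q' i); rewrite ?andbF ?andbT //; case: ifP.
    exact: (@N_proj R N Q' (ind R (fun i => (i <= Mf s)%N)) HN HU (ind_c00 _ (Mf s) (fun i h => h))).
  have g1 := grow s sr; have g2 := HQ (Mf s.+1).
  have X : (G / 2 - 1) * psi N (Mf s) <= N (ind R (fun i => (Mf s < i <= Mf s.+1)%N && Q' i)).
    lra.
  apply: le_trans (ler_wpM2l th0 X); rewrite mulrA thG mul1r //.
have sum1 : forall (c : nat -> R) (Q' : nat -> bool) i t, (1 <= t <= d)%N ->
    (Mf t.-1 < i <= Mf t)%N -> Q' i ->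
    \sum_(s <- iota 1 d) c s * ind R (fun i => (Mf s.-1 < i <= Mf s)%N && Q' i) i = c t.
  move=> c Q' i t tr ti qi.
  rewrite (@sum_blocks_in R (fun s => Mf s.-1) (fun s x => c s * ind R (fun i => (Mf s.-1 < i <= Mf s)%N && Q' i) x) 1 d t i Lm').
  - by rewrite /ind ti qi (leq_ltn_trans (leq0n _) (proj1 (andP ti))) mulr1.
  - by rewrite add1n ltnS.
  - exact: ti.
  - by move=> s hs; rewrite /ind (negbTE hs) andbF mulr0.
have sum1o : forall (c : nat -> R) (Q' : nat -> bool) i, [|| ~~ Q' i, i == 0%N | (Mf d < i)%N] ->
    \sum_(s <- iota 1 d) c s * ind R (fun i => (Mf s.-1 < i <= Mf s)%N && Q' i) i = 0.
  move=> c Q' i H.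
  rewrite (@sum_blocks_out R (fun s x => c s * ind R (fun i => (Mf s.-1 < i <= Mf s)%N && Q' i) x) 1 d i) // => s /andP[s1 sd].
  rewrite /ind; case: ifP; rewrite ?mulr0 // => /andP[i0 /andP[/andP[_ h1] qi]].
  move: H; rewrite qi /= => /orP[/eqP i00|hd]; first by rewrite i00 in i0.
  have : (Mf s <= Mf d)%N by apply: mono_nat => //; clear -sd; lia.
  by move=> hs; have := leq_ltn_trans (leq_trans h1 hs) hd; rewrite ltnn.
have sum2 : forall (c : nat -> R) (Q' : nat -> bool) i t, (1 <= t <= d)%N ->
    (Mf t < i <= Mf t.+1)%N -> Q' i ->
    \sum_(s <- iota 1 d) c s * ind R (fun i => (Mf s < i <= Mf s.+1)%N && Q' i) i = c t.
  move=> c Q' i t tr ti qi.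
  rewrite (@sum_blocks_in R Mf (fun s x => c s * ind R (fun i => (Mf s < i <= Mf s.+1)%N && Q' i) x) 1 d t i Mfm).
  - by rewrite /ind ti qi (leq_ltn_trans (leq0n _) (proj1 (andP ti))) mulr1.
  - by rewrite add1n ltnS.
  - exact: ti.
  - by move=> s hs; rewrite /ind (negbTE hs) andbF mulr0.
have sum2o : forall (c : nat -> R) (Q' : nat -> bool) i, [|| ~~ Q' i, (i <= Mf 1)%N | (k < i)%N] ->
    \sum_(s <- iota 1 d) c s * ind R (fun i => (Mf s < i <= Mf s.+1)%N && Q' i) i = 0.
  move=> c Q' i H.
  rewrite (@sum_blocks_out R (fun s x => c s * ind R (fun i => (Mf s < i <= Mf s.+1)%N && Q' i) x) 1 d i) // => s /andP[s1 sd].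
  rewrite /ind; case: ifP; rewrite ?mulr0 // => /andP[i0 /andP[/andP[h0 h1] qi]].
  have hs : (Mf 1 <= Mf s)%N by apply: mono_nat.
  move: H; rewrite qi /= => /orP[hi|hk].
    by have := leq_trans hi hs; rewrite leqNgt h0.
  by have := leq_trans h1 (Mfle _); rewrite leqNgt hk.
have hQb : forall Q : nat -> bool,
    (forall n, (psi N n - 1) / 2 <= N (ind R (fun i => (i <= n)%N && Q i))) ->
    (forall n, (psi N n - 1) / 2 <= N (ind R (fun i => (i <= n)%N && ~~ Q i))) ->
    N (fun i => if Q i then h i else 0) <= eps / 4.
  move=> Q HQ HQc.
  pose xq i := z i + d%:R^-1 * (if (Mf 1 < i <= k)%N && ~~ Q i then 1 else 0).
  have xqQ : forall t x, (1 <= t <= d.+1)%N -> (Mf t.-1 < x <= Mf t)%N -> (t == 1%N) || Q x ->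
      xq x = zval t.
    move=> t x tr xt hq; rewrite /xq (zin t x tr xt).
    case: ifP; last by rewrite mulr0 addr0.
    move=> /andP[/andP[h1 _] nq]; move: hq; rewrite (negbTE nq) orbF => /eqP t1.
    by move: xt; rewrite t1 => /andP[_ h2]; rewrite leqNgt h1 in h2.
  have xqN : forall t x, (1 <= t <= d)%N -> (Mf t < x <= Mf t.+1)%N -> ~~ Q x -> xq x = zval t.
    move=> t x tr xt nq; rewrite /xq (zin t.+1 x ltac:(clear -tr; lia) xt).
    rewrite nq andbT ifT ?mulr1 ?zvalS //; first by case/andP: tr.
    apply/andP; split; last by case/andP: xt => _ hh; exact: leq_trans hh (Mfle _).
    case/andP: xt => hh _; apply: leq_ltn_trans hh; apply: mono_nat => //; by case/andP: tr.
  have xqout : forall x, (x == 0%N) || (k < x)%N -> xq x = 0.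
    move=> x hx; rewrite /xq zout // ifF ?mulr0 ?addr0 //.
    case/orP: hx => [/eqP->|hk] //; by rewrite (leqNgt x k) hk /= andbF.
  have xqS : Splus_linf k xq.
    split.
    - by move=> i /xqout.
    - move=> i; rewrite /xq; apply: addr_ge0; first by case: zS => _ H _; exact: H.
      by apply: mulr_ge0; [rewrite invr_ge0 ler0n| case: ifP].
    - apply/eqP; rewrite eq_le; apply/andP; split.
        apply: supn_le => // i /blk [t [tr ti]].
        case: (boolP ((t == 1%N) || Q i)) => hq.
          by rewrite (xqQ t i tr ti hq); case/andP: (zval01 t tr) => h1 h2; rewrite ger0_norm.
        move: hq; rewrite negb_or => /andP[t1 nq].
        have tr' : (1 <= t.-1 <= d)%N by clear -tr t1; lia.
        have t0 : (0 < t)%N by clear -tr; lia.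
        have ti' : (Mf t.-1 < i <= Mf t.-1.+1)%N by rewrite prednK.
        rewrite (xqN t.-1 i tr' ti' nq).
        by case/andP: (zval01 t.-1 ltac:(clear -tr'; lia)) => h1 h2; rewrite ger0_norm.
      have := @supn_ge R k xq 1%N ltac:(clear -Hmk; lia); rewrite (xqQ 1%N 1%N isT in1 isT) zval1 normr1 //.
  have dist : supn k (fun i => xq i - z i) <= d%:R^-1.
    apply: supn_le; first by rewrite invr_ge0 ler0n.
    move=> i _; rewrite /xq addrC addKr normrM ger0_norm ?invr_ge0 ?ler0n //.
    by rewrite -[X in _ <= X]mulr1 ler_wpM2l ?invr_ge0 ?ler0n //; case: ifP; rewrite ?normr1 ?normr0.
  have Hg := Fom xq z xqS zS dist.
  have [Fxsupp Fx0 FxN] := Fmap xq xqS.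
  have rep : forall t, exists r, (1 <= t <= d)%N -> (Mf t < r <= Mf t.+1)%N && ~~ Q r.
    move=> t; case: (boolP (1 <= t <= d)%N) => tr; last by exists 0%N.
    have g1 := growQ (fun i => ~~ Q i) HQc t tr.
    have p1 := psi1 t (proj1 (andP tr)).
    apply: contrapT => nex.
    have all0 : forall i, ind R (fun i => (Mf t < i <= Mf t.+1)%N && ~~ Q i) i = 0.
      move=> i; rewrite /ind; case: ifP => // /andP[_ hi].
      by exfalso; apply: nex; exists i.
    move: g1; rewrite (N_ext N all0) N_zero // mulr0 => g1.
    by have := le_trans p1 g1; rewrite ler10.
  have [rf Hrf] := choice rep.
  pose b t := F xq (rf t).
  have rfr : forall t, (1 <= t <= d)%N -> (1 <= rf t <= k)%N.
    move=> t tr; have /andP[hr _] := Hrf t tr.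
    exact: inrange (t.+1) _ hr.
  have Fxq1 : forall t x, (1 <= t <= d)%N -> (Mf t.-1 < x <= Mf t)%N -> Q x -> F xq x = b t.
    move=> t x tr xt qx; apply: (Fstep xq xqS x (rf t)).
    - exact: inrange xt.
    - exact: rfr.
    - have /andP[hr nq] := Hrf t tr.
      rewrite (xqQ t x ltac:(clear -tr; lia) xt) ?qx ?orbT //.
      by rewrite (xqN t (rf t) tr hr nq).
  have Fxq2 : forall t x, (1 <= t <= d)%N -> (Mf t < x <= Mf t.+1)%N -> ~~ Q x -> F xq x = b t.
    move=> t x tr xt qx; apply: (Fstep xq xqS x (rf t)).
    - exact: (inrange t.+1) xt.
    - exact: rfr.
    - have /andP[hr nq] := Hrf t tr.
      by rewrite (xqN t x tr xt qx) (xqN t (rf t) tr hr nq).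
  pose g i := F xq i - F z i.
  have gout : forall i, (i == 0%N) || (k < i)%N -> g i = 0.
    by move=> i hi; rewrite /g Fxsupp // Fzsupp // subrr.
  have indk : forall i, (1 <= i <= k)%N -> ind R (fun i => (i <= k)%N) i = 1.
    by move=> i /andP[i1 ik]; rewrite /ind i1 ik.
  have hout : forall i, (i == 0%N) || (k < i)%N -> h i = 0.
    move=> i hi; rewrite /h Fzsupp // /ind.
    case: ifP => [/andP[i0 ik]|_]; last by rewrite mulr0 subrr.
    by case/orP: hi => [/eqP i00|hk]; [rewrite i00 in i0 | rewrite ltnNge ik in hk].
  have ioP : forall i, ~~ ((i == 0%N) || (k < i)%N) -> (1 <= i <= k)%N.
    by move=> i; rewrite negb_or -lt0n -leqNgt.
  pose gQ i := if Q i && (i <= Mf d)%N then g i else 0.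
  pose hQ i := if Q i then h i else 0.
  pose U1 := fun s i => (b s - al s.+1) * ind R (fun i => (Mf s.-1 < i <= Mf s)%N && Q i) i.
  pose U2 := fun s i => (al s.+1 - al d.+1) * ind R (fun i => (Mf s.-1 < i <= Mf s)%N && Q i) i.
  pose W1 := fun s i => (b s - al s.+1) * ind R (fun i => (Mf s < i <= Mf s.+1)%N && ~~ Q i) i.
  pose W2 := fun s i => (al s.+1 - al d.+1) * ind R (fun i => (Mf s < i <= Mf s.+1)%N && Q i) i.
  have sumvE : forall (V : nat -> nat -> R) i, sumv (map V (iota 1 d)) i = \sum_(s <- iota 1 d) V s i.
    by move=> V i; rewrite /sumv big_map.
  have ident : forall i, hQ i = - gQ i + (sumv (map U1 (iota 1 d)) i + sumv (map U2 (iota 1 d)) i).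
    move=> i; rewrite !sumvE /U1 /U2 /hQ /gQ.
    case: (boolP ((i == 0%N) || (k < i)%N)) => io.
      rewrite !sum1o; last 2 first.
      - by case/orP: io => [->|hk]; rewrite ?orbT // (leq_ltn_trans (Mfle d) hk) !orbT.
      - by case/orP: io => [->|hk]; rewrite ?orbT // (leq_ltn_trans (Mfle d) hk) !orbT.
      rewrite hout // gout //; case: (Q i); case: (i <= Mf d)%N; by rewrite /= ?oppr0 ?addr0.
    have ir := ioP i io.
    have [t [tr ti]] := blk i ir.
    case: (boolP (Q i)) => qi; last first.
      by rewrite !sum1o ?qi //= oppr0 !addr0.
    case: (ltnP t d.+1) => [tlt|tge].
      have tr' : (1 <= t <= d)%N by clear -tr tlt; lia.
      rewrite (sum1 _ Q i t tr' ti qi) (sum1 (fun s => al s.+1 - al d.+1) Q i t tr' ti qi).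
      have id : (i <= Mf d)%N.
        case/andP: ti => _ hi; apply: leq_trans hi _; apply: mono_nat => //; clear -tr'; lia.
      rewrite id /h /g indk // (Fzin t i tr ti) (Fxq1 t i tr' ti qi).
      rewrite /=; ring.
    have etd : t = d.+1 by apply/eqP; rewrite eqn_leq tge andbT; case/andP: tr.
    move: ti; rewrite etd /= => ti.
    have nid : ~~ (i <= Mf d)%N by rewrite -ltnNge; case/andP: ti.
    rewrite !sum1o ?(negbTE nid) /=; last 2 first.
    - by rewrite -ltnNge in nid; rewrite nid !orbT.
    - by rewrite -ltnNge in nid; rewrite nid !orbT.
    rewrite /h indk // (Fzin d.+1 i ltac:(clear -d0; lia) ti).
    by rewrite mulr1 subrr oppr0 !addr0.
  have cg : c00 g by exists k => i /gout.
  have ch : c00 h by exists k => i /hout.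
  have cgQ : c00 gQ := c00_proj (fun i => Q i && (i <= Mf d)%N) cg.
  have chQ : c00 hQ := c00_proj Q ch.
  have ioc : forall i, (i == 0%N) || (k < i)%N -> [|| ~~ Q i, i == 0%N | (Mf d < i)%N].
    by move=> i; case/orP => [->|hk]; rewrite ?orbT // (leq_ltn_trans (Mfle d) hk) !orbT.
  have cS1 : c00 (sumv (map U1 (iota 1 d))).
    by exists k => i io; rewrite sumvE sum1o // ioc.
  have cS2 : c00 (sumv (map U2 (iota 1 d))).
    by exists k => i io; rewrite sumvE sum1o // ioc.
  have cI1 : forall (Q' : nat -> bool) s, c00 (ind R (fun i => (Mf s.-1 < i <= Mf s)%N && Q' i)).
    by move=> Q' s; apply: (ind_c00 _ (Mf s)) => i /andP[/andP[_ ->]].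
  have cI2 : forall (Q' : nat -> bool) s, c00 (ind R (fun i => (Mf s < i <= Mf s.+1)%N && Q' i)).
    by move=> Q' s; apply: (ind_c00 _ (Mf s.+1)) => i /andP[/andP[_ ->]].
  have pI1 : forall (Q' : nat -> bool) s, N (ind R (fun i => (Mf s.-1 < i <= Mf s)%N && Q' i)) <= psi N (Mf s).
    move=> Q' s.
    have -> : N (ind R (fun i => (Mf s.-1 < i <= Mf s)%N && Q' i)) =
        N (fun i => if (Mf s.-1 < i)%N && Q' i then ind R (fun i => (i <= Mf s)%N) i else 0).
      apply: N_ext => i; rewrite /ind; case: (Q' i); rewrite ?andbF ?andbT //=.
      by case: (Mf s.-1 < i)%N; rewrite /= ?andbF.
    exact: (@N_proj R N _ (ind R (fun i => (i <= Mf s)%N)) HN HU (ind_c00 _ (Mf s) (fun i h => h))).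
  have e1 : N hQ <= N gQ + (N (sumv (map U1 (iota 1 d))) + N (sumv (map U2 (iota 1 d)))).
    rewrite (N_ext N ident).
    have cnQ : c00 (fun i => - gQ i) by have := c00_scale (-1) cgQ; under eq_fun do rewrite mulN1r.
    apply: le_trans (N_tri HN cnQ (c00_add cS1 cS2)) _.
    rewrite N_opp //; apply: lerD => //; exact: N_tri.
  have hg1 : N gQ <= N g := N_proj _ HN HU cg.
  have sz : (0 < size (iota 1 d))%N by rewrite size_iota.
  have eD : (size (iota 1 d))%:R `^ (q^-1 - inv_ext p) = D by rewrite size_iota.
  have hS1 : N (sumv (map U1 (iota 1 d))) <= eps / 16 * N (sumv (map W1 (iota 1 d))).
    rewrite -thD -eD.
    apply: (key_est HN Hlo Hup q1 qp th0 sz).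
    - by move=> s; apply: c00_scale; exact: cI1.
    - by move=> s; apply: c00_scale; exact: cI2.
    - exact: (@block_seq_ind R (fun s => Mf s.-1) (fun s => b s - al s.+1) Q 1 d Lm').
    - exact: (@block_seq_ind R Mf (fun s => b s - al s.+1) (fun i => ~~ Q i) 1 d Mfm).
    move=> s; rewrite mem_iota => /andP[s1 sd].
    have sr : (1 <= s <= d)%N by rewrite s1 -ltnS -add1n.
    rewrite /U1 /W1 !N_scale ?cI1 ?cI2 // mulrCA.
    apply: ler_wpM2l; first exact: normr_ge0.
    exact: le_trans (pI1 Q s) (growQ (fun i => ~~ Q i) HQc s sr).
  have hS2 : N (sumv (map U2 (iota 1 d))) <= eps / 16 * N (sumv (map W2 (iota 1 d))).
    rewrite -thD -eD.
    apply: (key_est HN Hlo Hup q1 qp th0 sz).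
    - by move=> s; apply: c00_scale; exact: cI1.
    - by move=> s; apply: c00_scale; exact: cI2.
    - exact: (@block_seq_ind R (fun s => Mf s.-1) (fun s => al s.+1 - al d.+1) Q 1 d Lm').
    - exact: (@block_seq_ind R Mf (fun s => al s.+1 - al d.+1) Q 1 d Mfm).
    move=> s; rewrite mem_iota => /andP[s1 sd].
    have sr : (1 <= s <= d)%N by rewrite s1 -ltnS -add1n.
    rewrite /U2 /W2 !N_scale ?cI1 ?cI2 // mulrCA.
    apply: ler_wpM2l; first exact: normr_ge0.
    exact: le_trans (pI1 Q s) (growQ Q HQ s sr).
  have ioc2 : forall (Q' : nat -> bool) i, (i == 0%N) || (k < i)%N -> [|| ~~ Q' i, (i <= Mf 1)%N | (k < i)%N].
    by move=> Q' i; case/orP => [/eqP->|->]; rewrite ?orbT.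
  have tsplit : forall t i, (1 <= t <= d.+1)%N -> (Mf t.-1 < i <= Mf t)%N ->
      ((t == 1%N) /\ (i <= Mf 1)%N) \/ ((1 <= t.-1 <= d)%N /\ (Mf t.-1 < i <= Mf t.-1.+1)%N /\ (Mf 1 < i)%N).
    move=> t i tr ti; case: (eqVneq t 1%N) => [t1|t1].
      by left; split => //; move: ti; rewrite t1 => /andP[].
    right; have t0 : (0 < t)%N by clear -tr; lia.
    have tr' : (1 <= t.-1 <= d)%N by clear -tr t1; lia.
    split => //; rewrite prednK //; split => //.
    case/andP: ti => hi _; apply: leq_ltn_trans hi; apply: mono_nat => //; by case/andP: tr'.
  have hW1 : N (sumv (map W1 (iota 1 d))) <= N g.
    have -> : N (sumv (map W1 (iota 1 d))) = N (fun i => if ~~ Q i && (Mf 1 < i)%N then g i else 0).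
      apply: N_ext => i; rewrite sumvE /W1.
      case: (boolP ((i == 0%N) || (k < i)%N)) => io.
        by rewrite (sum2o _ (fun i => ~~ Q i) i (ioc2 (fun i => ~~ Q i) i io)) gout //; case: ifP.
      have [t [tr ti]] := blk i (ioP i io).
      case: (boolP (Q i)) => qi /=.
        by rewrite (sum2o _ (fun i => ~~ Q i) i ltac:(by rewrite /= qi)).
      case: (tsplit t i tr ti) => [[t1 i1]|[tr' [ti' i1]]].
        by rewrite (sum2o _ (fun i => ~~ Q i) i ltac:(by rewrite /= i1 orbT)) ltnNge i1.
      rewrite (sum2 (fun s => b s - al s.+1) (fun i => ~~ Q i) i t.-1 tr' ti' qi) i1.
      rewrite /g (Fxq2 t.-1 i tr' ti' qi) (Fzin t i tr ti).
      have t0 : (0 < t)%N by clear -tr; lia.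
      by rewrite prednK.
    exact: N_proj.
  have hW2 : N (sumv (map W2 (iota 1 d))) <= N hQ.
    have -> : N (sumv (map W2 (iota 1 d))) = N (fun i => if (Mf 1 < i)%N then hQ i else 0).
      apply: N_ext => i; rewrite sumvE /W2.
      case: (boolP ((i == 0%N) || (k < i)%N)) => io.
        by rewrite (sum2o _ Q i (ioc2 Q i io)) /hQ hout //; case: ifP => //; case: ifP.
      have [t [tr ti]] := blk i (ioP i io).
      case: (boolP (Q i)) => qi /=; last first.
        by rewrite (sum2o _ Q i ltac:(by rewrite /= qi)) /hQ (negbTE qi); case: ifP.
      case: (tsplit t i tr ti) => [[t1 i1]|[tr' [ti' i1]]].
        by rewrite (sum2o _ Q i ltac:(by rewrite /= i1 orbT)) ltnNge i1.
      rewrite (sum2 (fun s => al s.+1 - al d.+1) Q i t.-1 tr' ti' qi) i1.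
      rewrite /hQ qi /h (Fzin t i tr ti) indk ?ioP // mulr1.
      have t0 : (0 < t)%N by clear -tr; lia.
      by rewrite prednK.
    exact: N_proj.
  have n0 : 0 <= N hQ by exact: N_ge0.
  have ng0 : 0 <= N g by exact: N_ge0.
  have A2 : N hQ <= eps / 8 + (eps / 16 * (eps / 8) + eps / 16 * N hQ).
    apply: le_trans e1 _; apply: lerD; first exact: le_trans hg1 Hg.
    apply: lerD.
      apply: le_trans hS1 _; apply: ler_wpM2l; [lra|]; exact: le_trans hW1 Hg.
    apply: le_trans hS2 _; apply: ler_wpM2l; [lra|]; exact: hW2.
  nra.
have HP1 : forall n, (psi N n - 1) / 2 <= N (ind R (fun i => (i <= n)%N && P i)).
  by move=> n; have := HA1 n; rewrite /psiP le_min => /andP[].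
have HP2 : forall n, (psi N n - 1) / 2 <= N (ind R (fun i => (i <= n)%N && ~~ P i)).
  by move=> n; have := HA1 n; rewrite /psiP le_min => /andP[].
have bP := hQb P HP1 HP2.
have bPc : N (fun i => if ~~ P i then h i else 0) <= eps / 4.
  apply: hQb; first exact: HP2.
  move=> n; rewrite (N_ext N (y := ind R (fun i => (i <= n)%N && P i))); first exact: HP1.
  by move=> i; rewrite /ind negbK.
have hout : forall i, (i == 0%N) || (k < i)%N -> h i = 0.
  move=> i hi; rewrite /h Fzsupp // /ind.
  case: ifP => [/andP[i0 ik]|_]; last by rewrite mulr0 subrr.
  by case/orP: hi => [/eqP i00|hk]; [rewrite i00 in i0 | rewrite ltnNge ik in hk].
have ch : c00 h by exists k => i /hout.
have hb : N h <= eps / 2.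
  rewrite (N_ext N (y := fun i => (if P i then h i else 0) + (if ~~ P i then h i else 0))).
    apply: le_trans (N_tri HN (c00_proj P ch) (c00_proj _ ch)) _; lra.
  by move=> i; case: (P i); rewrite /= ?addr0 ?add0r.
have cI : c00 (ind R (fun i => (i <= k)%N)) by apply: (ind_c00 _ k).
have psik : 1 <= psi N k by rewrite -Mfd1; exact: psi1.
have al0 : 0 <= al d.+1 by exact: Fz0.
have e1 : 1 <= N h + al d.+1 * psi N k.
  rewrite -FzN /psi -[al d.+1]ger0_norm // -N_scale //.
  rewrite (N_ext N (y := fun i => h i + al d.+1 * ind R (fun i => (i <= k)%N) i)).
    by apply: N_tri => //; exact: c00_scale.
  by move=> i; rewrite /h subrK.
have e2 : al d.+1 * psi N k <= 1 + N h.
  rewrite -FzN /psi -[al d.+1]ger0_norm // -N_scale //.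
  rewrite (N_ext N (y := fun i => F z i + (-1) * h i)).
    apply: le_trans (N_tri HN (supp_c00 Fzsupp) (c00_scale (-1) ch)) _.
    by rewrite N_scale // normrN1 mul1r.
  by move=> i; rewrite mulN1r /h opprB addrC subrK.
rewrite (N_ext N (y := fun i => h i + (al d.+1 - (psi N k)^-1) * ind R (fun i => (i <= k)%N) i)); last first.
  by move=> i; rewrite /h; ring.
apply: le_trans (N_tri HN ch (c00_scale _ cI)) _.
rewrite N_scale //.
have pk0 : 0 < psi N k by apply: lt_le_trans psik; exact: ltr01.
have -> : `|al d.+1 - (psi N k)^-1| * N (ind R (fun i => (i <= k)%N)) = `|al d.+1 * psi N k - 1|.
  rewrite -[N (ind R _)]/(psi N k) -[X in _ * X](ger0_norm (ltW pk0)) -normrM mulrBl mulVf //.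
  exact: lt0r_neq0.
have : `|al d.+1 * psi N k - 1| <= N h by rewrite ler_norml; apply/andP; split; lra.
lra.
Qed.
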